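(* Let $\alpha\in\mathbb{R}\setminus\{0\}$, let $\delta^{\star}(\alpha)=1/\alpha^2$ if $\alpha\le 2$ and $\delta^{\star}(\alpha)=\frac{1}{2\alpha}\exp\{1-\frac{\alpha}{2}\}$ if $\alpha>2$, let $|\delta|\le\delta^{\star}(\alpha)$, and let $C(u,v)=uv+\delta(1-e^{\alpha(u-u^2)})(1-e^{\alpha(v-v^2)})$ on $[0,1]^2$. Then $C$ has no tail dependence: $$\lambda_L=\lim_{u\to0^+}\frac{C(u,u)}{u}=0,\qquad \lambda_U=\lim_{u\to1^-}\frac{1-2u+C(u,u)}{1-u}=0.$$ *)

(* Defs.v *)
From mathcomp Require Import all_boot all_order all_algebra.
From mathcomp Require Import all_classical all_reals all_analysis.
Set Implicit Arguments. Unset Strict Implicit. Unset Printing Implicit Defensive.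
Import Order.TTheory GRing.Theory Num.Theory.
Local Open Scope ring_scope.

Definition delta_star {R : realType} (alpha : R) : R :=
  if alpha <= 2 then 1 / alpha ^+ 2
  else (1 / (2 * alpha)) * expR (1 - alpha / 2).

Definition copC {R : realType} (alpha delta : R) (u v : R) : R :=
  u * v + delta * (1 - expR (alpha * (u - u ^+ 2)))
                * (1 - expR (alpha * (v - v ^+ 2))).

(* Main.v *)
Require Import Defs.
From mathcomp Require Import all_boot all_order all_algebra.
From mathcomp Require Import all_classical all_reals all_analysis.
From mathcomp Require Import ring lra.
Import Order.TTheory GRing.Theory Num.Theory numFieldNormedType.Exports.
Local Open Scope classical_set_scope.
Local Open Scope ring_scope.

Lemma exp_bound (R : realType) (x : R) : `|x| <= 1 ->
  `|1 - expR x| <= `|x| * expR 1.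
Proof.
move=> hx.
have e1 : 2 <= expR (1:R) by have := expR_ge1Dx (1:R); lra.
have h1 := expR_ge1Dx x.
have h2 := expR_ge1Dx (- x).
rewrite expRN in h2.
have ep := expR_gt0 x.
case: (leP 0 x) => hx0.
- have -> : `|x| = x by rewrite ger0_norm.
  have -> : `|1 - expR x| = expR x - 1 by rewrite ler0_norm ?opprB //; lra.
  have hle : expR x <= expR 1 by rewrite ler_expR; move: hx; rewrite ger0_norm.
  have h3 : expR x * (1 - x) <= 1.
    have := ler_wpM2l (ltW ep) h2. by rewrite mulfV ?gt_eqF.
  nra.
- have -> : `|x| = - x by rewrite ltr0_norm.
  have hle : expR x <= 1 by rewrite -expR0 ler_expR ltW.
  have -> : `|1 - expR x| = 1 - expR x by rewrite ger0_norm //; lra.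
  nra.
Qed.

Lemma key (R : realType) (a d v : R) : 0 < v -> v < 1 -> `|a| * v <= 1 ->
  `|(v ^+ 2 + d * (1 - expR (a * (v - v ^+ 2))) ^+ 2) / v|
    <= (1 + `|d| * a ^+ 2 * expR 1 ^+ 2) * v.
Proof.
move=> v0 v1 av.
set x := a * (v - v ^+ 2).
have hx : `|x| <= `|a| * v.
  rewrite /x normrM ler_wpM2l // ger0_norm; nra.
have hg := @exp_bound R x (le_trans hx av).
set g := 1 - expR x in hg *.
have e0 : 0 < expR (1:R) := expR_gt0 1.
have hg2 : `|g| <= `|a| * v * expR 1.
  apply: (le_trans hg); rewrite ler_wpM2r // ltW //.
have -> : (v ^+ 2 + d * g ^+ 2) / v = v + d * (g ^+ 2 / v).
  by field; rewrite gt_eqF.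
apply: (le_trans (ler_normD _ _)).
rewrite normrM (gtr0_norm v0) normrM normrX normfV (gtr0_norm v0).
have ng : 0 <= `|g| := normr_ge0 g.
have nd : 0 <= `|d| := normr_ge0 d.
have na : 0 <= `|a| := normr_ge0 a.
have hsq : `|g| ^+ 2 <= (`|a| * v * expR 1) ^+ 2.
  by rewrite lerXn2r // ?nnegrE //; nra.
have : `|g| ^+ 2 / v <= `|a| ^+ 2 * expR 1 ^+ 2 * v.
  rewrite ler_pdivrMr //; apply: (le_trans hsq); rewrite le_eqVlt; apply/orP; left; apply/eqP; ring.
have ha2 : `|a| ^+ 2 = a ^+ 2 by rewrite -normrX ger0_norm // sqr_ge0.
move=> h; rewrite ha2 in h.
have := ler_wpM2l nd h. nra.
Qed.

Theorem proposition4 (R : realType) (alpha delta : R)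
  (halpha : alpha != 0) (hdelta : `|delta| <= delta_star alpha) :
  ((fun u : R => copC alpha delta u u / u) @ 0^'+ --> 0) /\
  ((fun u : R => (1 - 2 * u + copC alpha delta u u) / (1 - u)) @ 1^'- --> 0).
Proof.
set K := 1 + `|delta| * alpha ^+ 2 * expR 1 ^+ 2.
have ia : 0 < `|alpha|^-1 by rewrite invr_gt0 normr_gt0.
have hK : forall v : R, 0 < v -> v < 1 -> v < `|alpha|^-1 ->
  - (K * v) <= (v ^+ 2 + delta * (1 - expR (alpha * (v - v ^+ 2))) ^+ 2) / v <= K * v.
  move=> v v0 v1 va; rewrite -ler_norml; apply: key => //.
  by rewrite -ler_pdivlMl ?normr_gt0 // ?mulr1 ltW.
split.
- apply: (squeeze_cvgr (f:=fun u => - (K * u)) (h:=fun u => K * u)).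
  + near=> u.
    have u0 : 0 < u by near: u; exact: nbhs_right_gt.
    have u1 : u < 1 by near: u; exact: nbhs_right_lt ltr01.
    have ua : u < `|alpha|^-1 by near: u; exact: nbhs_right_lt ia.
    have -> : copC alpha delta u u = u ^+ 2 + delta * (1 - expR (alpha * (u - u ^+ 2))) ^+ 2.
      by rewrite /copC; ring.
    exact: hK.
  + apply: cvg_at_right_filter; rewrite [X in _ --> X](_ : _ = - (K * 0)); last by rewrite mulr0 oppr0.
    apply: cvgN; apply: cvgM; [exact: cvg_cst | exact: cvg_id].
  + apply: cvg_at_right_filter; rewrite [X in _ --> X](_ : _ = K * 0); last by rewrite mulr0.
    apply: cvgM; [exact: cvg_cst | exact: cvg_id].
- apply: (squeeze_cvgr (f:=fun u => - (K * (1 - u))) (h:=fun u => K * (1 - u))).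
  + near=> u.
    have u0 : 0 < u by near: u; exact: nbhs_left_gt ltr01.
    have u1 : u < 1 by near: u; exact: nbhs_left_lt.
    have ua : 1 - `|alpha|^-1 < u.
      by near: u; apply: nbhs_left_gt; rewrite ltrBlDr ltrDl.
    have -> : 1 - 2 * u + copC alpha delta u u = (1 - u) ^+ 2 + delta * (1 - expR (alpha * ((1 - u) - (1 - u) ^+ 2))) ^+ 2.
      have -> : (1 - u) - (1 - u) ^+ 2 = u - u ^+ 2 by ring.
      by rewrite /copC; ring.
    apply: hK; lra.
  + apply: cvg_at_left_filter; rewrite [X in _ --> X](_ : _ = - (K * (1 - 1))); last by rewrite subrr mulr0 oppr0.
    apply: cvgN; apply: cvgM; first exact: cvg_cst; apply: cvgB; [exact: cvg_cst | exact: cvg_id].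
  + apply: cvg_at_left_filter; rewrite [X in _ --> X](_ : _ = K * (1 - 1)); last by rewrite subrr mulr0.
    apply: cvgM; first exact: cvg_cst; apply: cvgB; [exact: cvg_cst | exact: cvg_id].
Unshelve. all: by end_near.
Qed.
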